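(* Let $E,F$ be Banach lattices, let $\mathcal{P}\subseteq \mathrm{L}(E,F)$ be a nonempty set of operators with $\mathcal{P}+\mathcal{P}\subseteq\mathcal{P}$ and $\mathcal{P}-\mathcal{P}\subseteq\mathcal{P}$, and let $T\in\mathrm{L}(E,F)$. (i) $T$ is an r-$\mathcal{P}$-operator if and only if $T\in\mathcal{P}$ and $T$ is $\mathcal{P}$-dominated. (ii) Assume the modulus $|T|$ of $T$ exists in $\mathrm{L}(E,F)$ and that $\mathcal{P}$ satisfies the domination property. Then $T$ is an r-$\mathcal{P}$-operator if and only if $|T|\in\mathcal{P}$.
   Context: All vector spaces are real; $\mathrm{L}(E,F)$ is the space of bounded linear operators, ordered by $S\le T$ iff $T-S$ is positive. Elements of $\mathcal{P}$ are called $\mathcal{P}$-operators. An operator $T:E\to F$ is an r-$\mathcal{P}$-operator if $T=T_1-T_2$ with $T_1,T_2$ positive operators belonging to $\mathcal{P}$. $\mathcal{P}$ satisfies the domination property if $0\le S\le T\in\mathcal{P}$ implies $S\in\mathcal{P}$. An operator $T\in\mathrm{L}(E,F)$ is $\mathcal{P}$-dominated if there is $U\in\mathcal{P}$ with $T\le U$ and $-T\le U$. *)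

(* Defs.v *)
From HB Require Import structures.
From mathcomp Require Import all_boot all_order all_algebra.
From mathcomp Require Import all_classical all_reals all_analysis.
Set Implicit Arguments. Unset Strict Implicit. Unset Printing Implicit Defensive.
Import Order.TTheory GRing.Theory Num.Theory.
Import numFieldNormedType.Exports.
Local Open Scope ring_scope.
Local Open Scope classical_set_scope.

Definition is_sup (T : Type) (le : T -> T -> Prop) (x y s : T) : Prop :=
  le x s /\ le y s /\ (forall z, le x z -> le y z -> le s z).

(* A Banach lattice: a (real) Banach space E together with a partial order
   le making it a vector lattice, with a lattice norm
   (|x| <= |y| implies ||x|| <= ||y||, where |x| = x \/ -x). *)
Record banach_lattice (R : realType) (E : completeNormedModType R)
    (le : E -> E -> Prop) : Prop := BanachLattice {
  bl_refl : forall x, le x x;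
  bl_antisym : forall x y, le x y -> le y x -> x = y;
  bl_trans : forall x y z, le x y -> le y z -> le x z;
  bl_add : forall x y z, le x y -> le (x + z) (y + z);
  bl_scale : forall (a : R) x y, 0 <= a -> le x y -> le (a *: x) (a *: y);
  bl_sup : forall x y, exists s, is_sup le x y s;
  bl_norm : forall x y ax ay, is_sup le x (- x) ax -> is_sup le y (- y) ay ->
              le ax ay -> `|x| <= `|y|
}.

Section Ops.
Variables (R : realType) (E F : completeNormedModType R).
Variables (leE : E -> E -> Prop) (leF : F -> F -> Prop).

Definition bounded_linear (T : E -> F) : Prop :=
  (forall (a : R) x y, T (a *: x + y) = a *: T x + T y) /\
  (exists M : R, forall x, `|T x| <= M * `|x|).

Definition positive_op (T : E -> F) : Prop :=
  forall x, leE 0 x -> leF 0 (T x).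

Definition op_le (S T : E -> F) : Prop :=
  positive_op (fun x => T x - S x).

Definition r_P_operator (P : set (E -> F)) (T : E -> F) : Prop :=
  exists T1 T2, P T1 /\ P T2 /\ positive_op T1 /\ positive_op T2 /\
    T = (fun x => T1 x - T2 x).

Definition P_dominated (P : set (E -> F)) (T : E -> F) : Prop :=
  exists U, P U /\ op_le T U /\ op_le (fun x => - T x) U.

Definition domination_property (P : set (E -> F)) : Prop :=
  forall S T, bounded_linear S -> op_le (fun _ => 0) S -> op_le S T -> P T -> P S.

Definition is_modulus (T U : E -> F) : Prop :=
  bounded_linear U /\ op_le T U /\ op_le (fun x => - T x) U /\
  (forall V, bounded_linear V -> op_le T V -> op_le (fun x => - T x) V ->
     op_le U V).
End Ops.

(* Main.v *)
Require Import Defs.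
From mathcomp Require Import all_boot all_order all_algebra.
From mathcomp Require Import all_classical all_reals all_analysis.
Import Order.TTheory GRing.Theory Num.Theory.
Import numFieldNormedType.Exports.
Local Open Scope ring_scope.
Local Open Scope classical_set_scope.

Set Implicit Arguments. Unset Strict Implicit.
Section Helpers.
Variables (R : realType) (E F : completeNormedModType R).
Variables (leE : E -> E -> Prop) (leF : F -> F -> Prop).
Hypothesis hF : banach_lattice leF.

Lemma half_half : (2^-1 + 2^-1 : R) = 1.
Proof. by rewrite [RHS](splitr 1) mul1r. Qed.

Lemma half_double (v : F) : 2^-1 *: (v + v) = v.
Proof. by rewrite scalerDr -scalerDl half_half scale1r. Qed.

Lemma le_eq (a b a' b' : F) : leF a b -> a = a' -> b = b' -> leF a' b'.
Proof. by move=> h <- <-. Qed.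

Lemma pos_add (a b : F) : leF 0 a -> leF 0 b -> leF 0 (a + b).
Proof.
move=> ha hb; apply: (bl_trans hF hb).
by apply: (le_eq (bl_add hF b ha)); rewrite ?add0r // addrC.
Qed.

Lemma pos_half (a : F) : leF 0 a -> leF 0 (2^-1 *: a).
Proof.
move=> ha; have h0 : (0:R) <= 2^-1 by rewrite invr_ge0.
have := bl_scale hF h0 ha.
by rewrite scaler0.
Qed.

Lemma dom_pos (T U : E -> F) : op_le leE leF T U ->
  op_le leE leF (fun x => - T x) U -> positive_op leE leF U.
Proof.
move=> h1 h2 x hx; have := pos_half (pos_add (h1 x hx) (h2 x hx)).
by rewrite opprK addrACA addNr addr0 half_double.
Qed.

Lemma bl_comb (A B : E -> F) (a b : R) :
  bounded_linear A -> bounded_linear B ->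
  bounded_linear (fun x => a *: A x + b *: B x).
Proof.
move=> [lA [MA hA]] [lB [MB hB]]; split.
  move=> c x y; rewrite lA lB !scalerDr !scalerA (mulrC a) (mulrC b) -!scalerA.
  by rewrite addrACA.
exists (`|a| * MA + `|b| * MB) => x.
apply: (le_trans (ler_normD _ _)); rewrite !normrZ mulrDl -!mulrA.
by apply: lerD; apply: ler_wpM2l => //.
Qed.

Lemma half_sub1 (u t : F) :
  2^-1 *: u + 2^-1 *: t = u - (2^-1 *: u + (- 2^-1 : R) *: t).
Proof.
by rewrite -{2}(half_double u) scalerDr opprD addrA addrK scaleNr opprK.
Qed.

Lemma half_sub2 (u t : F) :
  2^-1 *: u + (- 2^-1 : R) *: t = u - (2^-1 *: u + 2^-1 *: t).
Proof.
by rewrite -{2}(half_double u) scalerDr opprD addrA addrK scaleNr.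
Qed.

End Helpers.

Theorem proposition3p4 (R : realType) (E F : completeNormedModType R)
  (leE : E -> E -> Prop) (leF : F -> F -> Prop)
  (hE : banach_lattice leE) (hF : banach_lattice leF)
  (P : set (E -> F))
  (hPL : forall S, P S -> bounded_linear S)
  (hP0 : P !=set0)
  (hPadd : forall S T, P S -> P T -> P (fun x => S x + T x))
  (hPsub : forall S T, P S -> P T -> P (fun x => S x - T x))
  (T : E -> F) (hT : bounded_linear T) :
  (r_P_operator leE leF P T <-> (P T /\ P_dominated leE leF P T)) /\
  (forall U, is_modulus leE leF T U -> domination_property leE leF P ->
     (r_P_operator leE leF P T <-> P U)).
Proof.
have fwd : forall T1 T2, positive_op leE leF T1 -> positive_op leE leF T2 ->
    op_le leE leF (fun x => T1 x - T2 x) (fun x => T1 x + T2 x) /\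
    op_le leE leF (fun x => - (T1 x - T2 x)) (fun x => T1 x + T2 x).
  move=> T1 T2 p1 p2; split=> x hx.
    apply: (le_eq (pos_add hF (p2 x hx) (p2 x hx))) => //.
    by rewrite opprB [in RHS]addrC addrA subrK.
  apply: (le_eq (pos_add hF (p1 x hx) (p1 x hx))) => //.
  by rewrite opprK addrACA subrr addr0.
split.
  split.
    move=> [T1 [T2 [P1 [P2 [p1 [p2 ->]]]]]]; split; first exact: hPsub.
    by exists (fun x => T1 x + T2 x); split; [exact: hPadd | exact: fwd].
  move=> [PT [U [PU [h1 h2]]]].
  exists (fun x => U x + T x), U; split; first exact: hPadd.
  split => //; split.
    by move=> x hx; have := h2 x hx; rewrite opprK.
  split; first exact: dom_pos h1 h2.
  by apply: funext => x; rewrite addrAC subrr add0r.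
move=> U [bU [h1 [h2 hmin]]] hdom; split.
  move=> [T1 [T2 [P1 [P2 [p1 [p2 eT]]]]]].
  have [f1 f2] := fwd T1 T2 p1 p2; subst T.
  apply: (hdom U (fun x => T1 x + T2 x)) => //.
  - by move=> x hx; rewrite subr0; exact: dom_pos h1 h2 x hx.
  - apply: hmin; [exact: (hPL _ (hPadd _ _ P1 P2)) | exact: f1 | exact: f2].
  - exact: (hPadd _ _ P1 P2).
move=> PU.
have pU := dom_pos hF h1 h2.
pose S1 := fun x => 2^-1 *: U x + 2^-1 *: T x.
pose S2 := fun x => 2^-1 *: U x + (- 2^-1) *: T x.
have eS1 : forall x, S1 x = 2^-1 *: (U x - - T x).
  by move=> x; rewrite /S1 opprK scalerDr.
have eS2 : forall x, S2 x = 2^-1 *: (U x - T x).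
  by move=> x; rewrite /S2 scalerBr scaleNr.
have pS1 : positive_op leE leF S1.
  by move=> x hx; rewrite eS1; apply: pos_half => //; exact: h2.
have pS2 : positive_op leE leF S2.
  by move=> x hx; rewrite eS2; apply: pos_half => //; exact: h1.
have PS1 : P S1.
  apply: (hdom S1 U); last exact: PU.
  - exact: (bl_comb (2^-1) (2^-1) bU hT).
  - by move=> x hx; rewrite subr0; exact: pS1.
  - move=> x hx; apply: (le_eq (pS2 x hx)) => //; exact: half_sub2.
have PS2 : P S2.
  apply: (hdom S2 U); last exact: PU.
  - exact: (bl_comb (2^-1) (- 2^-1) bU hT).
  - by move=> x hx; rewrite subr0; exact: pS2.
  - move=> x hx; apply: (le_eq (pS1 x hx)) => //; exact: half_sub1.
exists S1, S2; do 4!split => //.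
apply: funext => x; rewrite /S1 /S2 opprD addrACA subrr add0r scaleNr opprK.
by rewrite -scalerDl half_half scale1r.
Qed.
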